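(* Let $h>0$ and let $\nu\in\mathfrak N_{\rceil\cdot\lfloor_h}(X)$ be such that $D_\mu\nu\in H^\omega(X)$. Then \[ \|D_\mu\nu\|_{\mathcal B(X)}\le\|D_\mu\nu-\overline S_h\nu\|_{\mathcal B(X)}+\frac{\rceil\nu\lfloor_h}{\mu(B_h)}\le\frac{\|D_\mu\nu\|_{H^\omega(X)}}{\mu(B_h)}\int_{B_h}\omega(\rho(u,\theta))\,d\mu(u)+\frac{\rceil\nu\lfloor_h}{\mu(B_h)}, \] where $\overline S_h\nu(x)=\frac{\nu(x+B_h)}{\mu(B_h)}$ (an operator $\mathfrak N_{\rceil\cdot\lfloor_h}(X)\to\mathcal B(X)$ of norm $1/\mu(B_h)$). The inequality is sharp: it becomes an equality for the charge $\nu_{e,h}$ with $D_\mu\nu_{e,h}(x)=(\omega(h)-\omega(\rho(x,\theta)))_+$.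
   Context: Standing setting: $(X,\rho)$ is a metric space with a Borel measure $\mu$. $X$ is a commutative monoid, i.e. there is an associative and commutative binary operation $+$ on $X$ with a neutral element $\theta$. The measure is translation invariant: $\mu(x+Q)=\mu(Q)$ for every $\mu$-measurable $Q\subset X$ and every $x\in X$; correspondingly $\int_{B_h}g(x+u)\,d\mu(u)=\int_{x+B_h}g(u)\,d\mu(u)$ for locally integrable $g$. Moreover $\rho(x+y,x)\le\rho(y,\theta)$ for all $x,y\in X$. $B_h$ denotes the open ball of radius $h$ centered at $\theta$, and it is assumed that $0<\mu(B_h)<\infty$ and $B_h\neq\{\theta\}$ for every $h>0$. Every continuous real function on $X$ is integrable on every open ball. For a function $f$, $\|f\|_{\mathcal B(X)}=\sup_{x\in X}|f(x)|$. $\alpha_+=\max\{\alpha,0\}$. A modulus of continuity is a function $\omega\colon[0,\infty)\to[0,\infty)$ that is non-decreasing, semi-additive ($\omega(s+t)\le\omega(s)+\omega(t)$), with $\omega(0)=0$, and not identically zero. $H^\omega(X)$ is the space of $f\colon X\to\mathbb R$ with $\|f\|_{H^\omega(X)}:=\sup_{x\neq y}\frac{|f(x)-f(y)|}{\omega(\rho(x,y))}<\infty$. $\mathfrak N(X)$ is the linear space of charges (signed measures) $\nu$ defined on the $\mu$-measurable subsets of $X$ that are absolutely continuous with respect to $\mu$; for such $\nu$ the Radon–Nikodym derivative $D_\mu\nu$ is the integrable function $f$ with $\nu(Q)=\int_Qf\,d\mu$ for all measurable $Q$. For $h>0$, $\rceil\nu\lfloor_h=\sup_{x\in X}|\nu(x+B_h)|$,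 and $\mathfrak N_{\rceil\cdot\lfloor_h}(X)$ is the set of $\nu\in\mathfrak N(X)$ with $\rceil\nu\lfloor_h<\infty$. *)

(* Defs.v *)
From HB Require Import structures.
From mathcomp Require Import all_boot all_order all_algebra.
From mathcomp Require Import all_classical all_reals all_analysis.
Set Implicit Arguments. Unset Strict Implicit. Unset Printing Implicit Defensive.
Import Order.TTheory GRing.Theory Num.Theory.
Import numFieldNormedType.Exports.
Local Open Scope classical_set_scope.
Local Open Scope ring_scope.

Section Defs.
Context {R : realType} {X : Type}.

Definition is_metric (rho : X -> X -> R) : Prop :=
  [/\ (forall x y, 0 <= rho x y),
      (forall x y, rho x y = 0 <-> x = y),
      (forall x y, rho x y = rho y x) &
      (forall x y z, rho x z <= rho x y + rho y z)].

Definition oball (rho : X -> X -> R) (c : X) (r : R) : set X :=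
  [set u | rho c u < r].

Definition B (rho : X -> X -> R) (theta : X) (h : R) : set X := oball rho theta h.

Definition rho_open (rho : X -> X -> R) (A : set X) : Prop :=
  forall x, A x -> exists r, 0 < r /\ oball rho x r `<=` A.

Definition rho_continuous (rho : X -> X -> R) (g : X -> R) : Prop :=
  forall x e, 0 < e -> exists dl, 0 < dl /\
    forall y, rho x y < dl -> `|g x - g y| < e.

Definition transl (add : X -> X -> X) (x : X) (Q : set X) : set X :=
  [set add x u | u in Q].

Definition comm_monoid (add : X -> X -> X) (theta : X) : Prop :=
  [/\ (forall x y z, add x (add y z) = add (add x y) z),
      (forall x y, add x y = add y x) &
      (forall x, add theta x = x)].

Definition modulus_of_continuity (omega : R -> R) : Prop :=
  [/\ (forall t, 0 <= t -> 0 <= omega t),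
      (forall s t, 0 <= s -> s <= t -> omega s <= omega t),
      (forall s t, 0 <= s -> 0 <= t -> omega (s + t) <= omega s + omega t),
      omega 0 = 0 &
      (exists t, 0 <= t /\ omega t != 0)].

Definition supnorm (f : X -> R) : \bar R :=
  ereal_sup [set (`|f x|)%:E | x in [set: X]].

Definition Hnorm (rho : X -> X -> R) (omega : R -> R) (f : X -> R) : \bar R :=
  ereal_sup [set (`|f xy.1 - f xy.2| / omega (rho xy.1 xy.2))%:E
            | xy in [set xy : X * X | xy.1 <> xy.2]].
End Defs.

Section Defs2.
Context {R : realType} {d : measure_display} {X : measurableType d}.
Local Open Scope ereal_scope.

Definition loc_integrable (mu : {measure set X -> \bar R}) (rho : X -> X -> R)
  (g : X -> R) : Prop :=
  forall y r, (0 < r)%R -> mu.-integrable (oball rho y r) (EFin \o g).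

Definition standing_setting (mu : {measure set X -> \bar R}) (rho : X -> X -> R)
  (add : X -> X -> X) (theta : X) : Prop :=
  is_metric rho /\
      (* Borel measure: all rho-open sets are (mu-)measurable *)
      (forall A, rho_open rho A -> measurable A) /\
      comm_monoid add theta /\
      (forall Q x, measurable Q -> measurable (transl add x Q) /\
                                   mu (transl add x Q) = mu Q) /\
      (forall g, loc_integrable mu rho g -> forall x h, (0 < h)%R ->
         mu.-integrable (B rho theta h) (fun u => (g (add x u))%:E) /\
         \int[mu]_(u in B rho theta h) (g (add x u))%:E =
         \int[mu]_(u in transl add x (B rho theta h)) (g u)%:E) /\
      (forall x y, (rho (add x y) x <= rho y theta)%R) /\
      (forall h, (0 < h)%R ->
         0 < mu (B rho theta h) < +oo /\ B rho theta h <> [set theta]) /\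
      (forall g, rho_continuous rho g -> loc_integrable mu rho g).

Definition chnorm (rho : X -> X -> R) (add : X -> X -> X) (theta : X)
  (nu : set X -> \bar R) (h : R) : \bar R :=
  ereal_sup [set `| nu (transl add x (B rho theta h)) | | x in [set: X]].

Definition Sbar (mu : {measure set X -> \bar R}) (rho : X -> X -> R)
  (add : X -> X -> X) (theta : X) (nu : set X -> \bar R) (h : R) (x : X) : \bar R :=
  nu (transl add x (B rho theta h)) / mu (B rho theta h).

Definition supnorm_diff (mu : {measure set X -> \bar R}) (rho : X -> X -> R)
  (add : X -> X -> X) (theta : X) (g : X -> R) (nu : set X -> \bar R) (h : R)
  : \bar R :=
  ereal_sup [set `| (g x)%:E - Sbar mu rho add theta nu h x | | x in [set: X]].
End Defs2.

(* Main.v *)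
Require Import Defs.
From HB Require Import structures.
From mathcomp Require Import all_boot all_order all_algebra.
From mathcomp Require Import all_classical all_reals all_analysis.
From mathcomp Require Import measurable_realfun.
From mathcomp Require Import ring lra.
Import Order.TTheory GRing.Theory Num.Theory.
Import numFieldNormedType.Exports.
Local Open Scope classical_set_scope.
Local Open Scope ring_scope.

Section bnd.
Context (R : realType) (d : measure_display) (X : measurableType d)
  (mu : {measure set X -> \bar R}).

Lemma bnd_integrable (D : set X) (g : X -> R) (K : R) :
  measurable D -> (mu D < +oo)%E -> measurable_fun D g ->
  (forall u, D u -> `|g u| <= K) -> mu.-integrable D (EFin \o g).
Proof.
move=> mD Dfin mg gK.
apply: (@le_integrable _ _ _ mu D mD _ (fun=> K%:E)).
- exact/measurable_EFinP.
- move=> u Du /=.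
  have K0 : 0 <= K by apply: le_trans (gK u Du).
  by rewrite lee_fin (ger0_norm K0) gK.
- apply/integrableP; split; first exact: measurable_cst.
  rewrite (_ : (fun x => _) = cst `|K|%:E) //.
  by rewrite integral_cst // lte_mul_pinfty.
Qed.
End bnd.

Section main.
Context (R : realType) (d : measure_display) (X : measurableType d)
  (mu : {measure set X -> \bar R}) (rho : X -> X -> R) (add : X -> X -> X)
  (theta : X) (omega : R -> R) (h : R).
Hypotheses (HS : standing_setting mu rho add theta)
  (Hom : modulus_of_continuity omega) (h0 : 0 < h).

Let rge0 : forall x y, 0 <= rho x y. Proof. by case: HS => -[]. Qed.
Let req : forall x y, rho x y = 0 <-> x = y. Proof. by case: HS => -[]. Qed.
Let rsym : forall x y, rho x y = rho y x. Proof. by case: HS => -[]. Qed.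
Let rtri : forall x y z, rho x z <= rho x y + rho y z. Proof. by case: HS => -[]. Qed.
Let rxx x : rho x x = 0. Proof. exact/req. Qed.
Let Hopen : forall A, rho_open rho A -> measurable A. Proof. by case: HS => _ []. Qed.
Let add0 : forall x, add theta x = x. Proof. by case: HS => _ [_ [[]]]. Qed.
Let Htr : forall Q x, measurable Q -> measurable (transl add x Q) /\
                                   mu (transl add x Q) = mu Q.
Proof. by case: HS => _ [_ [_ []]]. Qed.
Let Hint : forall g, loc_integrable mu rho g -> forall x h, (0 < h)%R ->
         mu.-integrable (B rho theta h) (fun u => (g (add x u))%:E) /\
         (\int[mu]_(u in B rho theta h) (g (add x u))%:E =
         \int[mu]_(u in transl add x (B rho theta h)) (g u)%:E)%E.
Proof. by case: HS => _ [_ [_ [_ []]]]. Qed.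
Let Hadd : forall x y, (rho (add x y) x <= rho y theta)%R.
Proof. by case: HS => _ [_ [_ [_ [_ []]]]]. Qed.
Let HB : forall h, (0 < h)%R ->
         (0 < mu (B rho theta h) < +oo)%E /\ B rho theta h <> [set theta].
Proof. by case: HS => _ [_ [_ [_ [_ [_ []]]]]]. Qed.

Let om_ge0 : forall t, 0 <= t -> 0 <= omega t. Proof. by case: Hom. Qed.
Let om_mon : forall s t, 0 <= s -> s <= t -> omega s <= omega t. Proof. by case: Hom. Qed.
Let om_sub : forall s t, 0 <= s -> 0 <= t -> omega (s + t) <= omega s + omega t.
Proof. by case: Hom. Qed.
Let om0 : omega 0 = 0. Proof. by case: Hom. Qed.
Let om_nz : exists t, 0 <= t /\ omega t != 0. Proof. by case: Hom. Qed.

Lemma om_pos t : 0 < t -> 0 < omega t.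
Proof.
move=> t0; rewrite lt_neqAle om_ge0 ?ltW // andbT eq_sym.
apply/negP => /eqP ot0.
have H : forall n : nat, forall s, 0 <= s -> s <= n%:R * t -> omega s = 0.
  elim=> [|n IH] s s0 sn.
    by have -> : s = 0 by apply/le_anti; rewrite s0 andbT; move: sn; rewrite mul0r.
  have [snt|snt] := leP s (n%:R * t); first exact: IH.
  apply/le_anti; rewrite om_ge0 // andbT.
  have [st|st] := leP s t.
    by rewrite -ot0 om_mon.
  have st0 : 0 <= s - t by rewrite subr_ge0 ltW.
  have stn : s - t <= n%:R * t by rewrite lerBlDr; move: sn; rewrite -natr1 mulrDl mul1r.
  have -> : s = (s - t) + t by rewrite subrK.
  by have := om_sub _ _ st0 (ltW t0); rewrite (IH (s - t)) // ot0 addr0.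
case: om_nz => s [s0 /eqP]; apply.
have [n Hn] : exists n : nat, s / t <= n%:R.
  exists (Num.bound (s / t)); apply: ltW; apply: archi_boundP.
  by rewrite divr_ge0 // ltW.
apply: (H n) => //; by rewrite -ler_pdivrMr.
Qed.

Lemma oball_open c r : rho_open rho (oball rho c r).
Proof.
move=> u; rewrite /oball /= => cu; exists (r - rho c u); split; first by rewrite subr_gt0.
move=> v; rewrite /oball /= => uv.
have := rtri c u v; have : rho c u + rho u v < r by rewrite -ltrBrDl.
move=> h1 h2; exact: le_lt_trans h2 h1.
Qed.

Lemma meas_oball c r : measurable (oball rho c r).
Proof. exact/Hopen/oball_open. Qed.

Lemma rho_meas : measurable_fun setT (fun u => rho u theta).
Proof.
have mE : @measurable _ R = <<s @RGenInftyO.G R>> by exact: (RGenInftyO.measurableE R).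
apply: (measurability (@RGenInftyO.G R) mE) => _ [_ [x ->] <-].
rewrite setTI (_ : _ @^-1` _ = oball rho theta x); first exact: meas_oball.
apply/seteqP; split => u; rewrite /oball /= in_itv /= rsym //.
Qed.

Lemma omr_meas : measurable_fun setT (fun u => omega (rho u theta)).
Proof.
have -> : (fun u => omega (rho u theta)) =
   (fun t => omega (Num.max t 0)) \o (fun u => rho u theta).
  by apply/funext => u /=; rewrite max_l ?rge0.
apply: measurableT_comp; last exact: rho_meas.
apply: nondecreasing_measurable => // s t st.
by apply: om_mon; rewrite ?ge_max !le_max ?st ?lexx ?orbT.
Qed.

Local Notation Bh := (B rho theta h).

Lemma mBh : measurable Bh. Proof. exact: meas_oball. Qed.

Lemma muBE : mu Bh = (fine (mu Bh))%:E.
Proof.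
have [/andP[m0 moo] _] := HB h h0.
by rewrite fineK // ge0_fin_numE // ltW.
Qed.

Lemma M_gt0 : 0 < fine (mu Bh).
Proof.
have [/andP[m0 moo] _] := HB h h0.
by rewrite -lte_fin -muBE.
Qed.

Lemma mu_fin : (mu Bh < +oo)%E.
Proof. by rewrite muBE ltry. Qed.

Lemma thetaB : Bh theta.
Proof. by rewrite /B /oball /= rxx. Qed.

Lemma exists_y : exists2 y, Bh y & y <> theta.
Proof.
apply: contrapT => hn; have [_ /(_ _)] := HB h h0; apply.
apply/seteqP; split => u /=; last by move=> ->; exact: thetaB.
move=> Bu; apply: contrapT => ut; apply: hn; by exists u.
Qed.

Lemma omB u : Bh u -> omega (rho u theta) <= omega h.
Proof.
by rewrite /B /oball /= => hu; apply: om_mon; rewrite ?rge0 // rsym ltW.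
Qed.

Lemma Jint : mu.-integrable Bh (EFin \o (fun u => omega (rho u theta))).
Proof.
apply: (@bnd_integrable _ _ _ _ _ _ (omega h) mBh mu_fin).
- exact: measurable_funS omr_meas.
- by move=> u Bu; rewrite ger0_norm ?om_ge0 ?rge0 // omB.
Qed.

Lemma ediv_fin (a b : R) : b != 0 -> (a%:E / b%:E = (a / b)%:E)%E.
Proof. by move=> b0; rewrite inver (negbTE b0). Qed.

Section part1.
Variables (nu : set X -> \bar R) (f : X -> R).
Hypotheses (intf : mu.-integrable setT (EFin \o f))
  (hnu : forall Q, measurable Q -> nu Q = (\int[mu]_(x in Q) (f x)%:E)%E)
  (hc : (chnorm rho add theta nu h < +oo)%E)
  (hH : (Hnorm rho omega f < +oo)%E).

Let floc : loc_integrable mu rho f.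
Proof. by move=> y r r0; apply: integrableS intf => //; exact: meas_oball. Qed.

Let intx x : mu.-integrable Bh (fun u => (f (add x u))%:E).
Proof. by have [] := Hint _ floc x _ h0. Qed.

Let nuE0 x : nu (transl add x Bh) = (\int[mu]_(u in Bh) (f (add x u))%:E)%E.
Proof.
have [_ ->] := Hint _ floc x _ h0.
by apply: hnu; have [] := Htr _ x mBh.
Qed.

Let F x := fine (nu (transl add x Bh)).

Let nuE x : nu (transl add x Bh) = (F x)%:E.
Proof. by rewrite /F fineK // nuE0 integrable_fin_num //; exact: mBh. Qed.

Let M := fine (mu Bh).

Lemma F_le x : ((`|F x|)%:E <= chnorm rho add theta nu h)%E.
Proof. by apply: ereal_sup_ubound; exists x => //; rewrite nuE abse_EFin. Qed.

Let C := fine (chnorm rho add theta nu h).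

Let cE : chnorm rho add theta nu h = C%:E.
Proof.
have c0 : (0 <= chnorm rho add theta nu h)%E.
  by apply: le_trans (F_le theta); rewrite lee_fin.
by rewrite /C fineK // ge0_fin_numE.
Qed.

Let HH : (0 <= Hnorm rho omega f)%E.
Proof.
have [y _ yt] := exists_y.
apply: le_trans _ (ereal_sup_ubound _); last first.
  by exists (y, theta) => //=.
by rewrite lee_fin divr_ge0 // om_ge0.
Qed.

Let Hr := fine (Hnorm rho omega f).
Let HE : Hnorm rho omega f = Hr%:E.
Proof. by rewrite /Hr fineK // ge0_fin_numE. Qed.

Lemma Hbound x y : `|f x - f y| <= Hr * omega (rho x y).
Proof.
have [->|xy] := eqVneq x y; first by rewrite subrr normr0 rxx om0 mulr0.
have rpos : 0 < rho x y.
  by rewrite lt_neqAle rge0 andbT eq_sym; apply/eqP => /req; apply/eqP.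
have opos := om_pos _ rpos.
rewrite -ler_pdivrMr //.
rewrite -lee_fin -HE; apply: ereal_sup_ubound.
by exists (x, y) => //=; apply/eqP.
Qed.


Let J := fine (\int[mu]_(u in Bh) (omega (rho u theta))%:E)%E.
Let JE : (\int[mu]_(u in Bh) (omega (rho u theta))%:E)%E = J%:E.
Proof. by rewrite /J fineK // integrable_fin_num //; [exact: mBh|exact: Jint]. Qed.

Lemma pt x : `|f x - F x / M| <= Hr * J / M.
Proof.
have Mpos : 0 < M := M_gt0.
have icst : mu.-integrable Bh (EFin \o cst (f x)).
  apply: (@bnd_integrable _ _ _ _ _ _ `|f x| mBh mu_fin).
  - by apply: measurable_cst.
  - by move=> u _.
have idiff : mu.-integrable Bh (fun u => (f x - f (add x u))%:E).
  exact: (integrableB mBh icst (intx x)).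
have key : ((M * f x - F x)%:E = \int[mu]_(u in Bh) ((f x - f (add x u))%:E))%E.
  rewrite (_ : (fun u => (f x - f (add x u))%:E) =
     ((fun u : X => (f x)%:E) \- (fun u => (f (add x u))%:E))%E); last by apply/funext.
  rewrite integralB //; last exact: mBh.
  rewrite (_ : (fun u : X => (f x)%:E) = cst (f x)%:E) // integral_cst; last exact: mBh.
  by rewrite -nuE0 nuE muBE -EFinM -EFinB mulrC.
have bnd : ((`|M * f x - F x|)%:E <= (Hr * J)%:E)%E.
  rewrite -abse_EFin key.
  apply: le_trans (le_abse_integral _ mBh (measurable_int _ idiff)) _.
  apply: (@le_trans _ _ (\int[mu]_(u in Bh) (Hr * omega (rho u theta))%:E)%E).
    apply: ge0_le_integral => //.
    - exact: mBh.
    - apply: measurableT_comp => //; exact: (measurable_int _ idiff).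
    - apply/measurable_EFinP; apply: measurable_funM; first exact: measurable_cst.
      exact: measurable_funS omr_meas.
    - move=> u Bu; rewrite abse_EFin lee_fin.
      apply: le_trans (Hbound x (add x u)) _.
      apply: ler_wpM2l; first by rewrite /Hr fine_ge0.
      by apply: om_mon; rewrite ?rge0 // rsym Hadd.
  under eq_integral do rewrite EFinM.
  rewrite integralZl; [by rewrite JE| exact: mBh| exact: Jint].
have -> : f x - F x / M = (M * f x - F x) / M.
  by field; rewrite gt_eqF.
have Mi : 0 < M^-1 by rewrite invr_gt0.
rewrite normrM (ger0_norm (ltW Mi)).
by rewrite ler_pM2r // -lee_fin.
Qed.

Lemma part1_res :
 (supnorm f <= supnorm_diff mu rho add theta f nu h
               + chnorm rho add theta nu h / mu Bh)%E /\
 (supnorm_diff mu rho add theta f nu h + chnorm rho add theta nu h / mu Bh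
   <= Hnorm rho omega f / mu Bh * \int[mu]_(u in Bh) (omega (rho u theta))%:E
      + chnorm rho add theta nu h / mu Bh)%E.
Proof.
have Mpos : 0 < M := M_gt0.
have M0 : M != 0 by rewrite gt_eqF.
have SE x : Sbar mu rho add theta nu h x = (F x / M)%:E.
  by rewrite /Sbar nuE muBE ediv_fin.
have dlow x : ((`|f x - F x / M|)%:E <= supnorm_diff mu rho add theta f nu h)%E.
  by apply: ereal_sup_ubound; exists x => //; rewrite SE -EFinB abse_EFin.
have dup : (supnorm_diff mu rho add theta f nu h <= (Hr * J / M)%:E)%E.
  by apply/ereal_supP => _ [x _ <-]; rewrite SE -EFinB abse_EFin lee_fin pt.
have cmE : (chnorm rho add theta nu h / mu Bh = (C / M)%:E)%E.
  by rewrite cE muBE ediv_fin.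
split.
  apply/ereal_supP => _ [x _ <-]; rewrite cmE.
  apply: (@le_trans _ _ ((`|f x - F x / M| + C / M)%:E)); last first.
    by rewrite EFinD leeD2r.
  rewrite lee_fin.
  have hF : `|F x| <= C by rewrite -lee_fin -cE F_le.
  have e : f x = (f x - F x / M) + F x / M by rewrite subrK.
  rewrite [X in `|X| <= _]e; apply: le_trans (ler_normD _ _) _.
  rewrite lerD2l normrM (ger0_norm (ltW (_ : 0 < M^-1))) ?invr_gt0 //.
  by rewrite ler_pM2r ?invr_gt0.
apply: leeD2r.
rewrite HE JE muBE ediv_fin // -EFinM.
by rewrite mulrAC.
Qed.
End part1.

Section sharp.
Let fe := fun x => Num.max (omega h - omega (rho x theta)) 0.
Let nue := fun Q => (\int[mu]_(x in Q) (fe x)%:E)%E.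

Let oh0 : 0 <= omega h. Proof. by rewrite om_ge0 // ltW. Qed.

Lemma fe_ge0 x : 0 <= fe x. Proof. by rewrite /fe le_max lexx orbT. Qed.

Lemma fe_le x : fe x <= omega h.
Proof. by rewrite /fe ge_max oh0 andbT lerBlDr lerDl om_ge0. Qed.

Lemma fe_out x : ~ Bh x -> fe x = 0.
Proof.
move=> hx; have {}hx : h <= rho theta x by rewrite leNgt; apply/negP.
rewrite /fe; apply: max_r; rewrite subr_le0 om_mon ?(ltW h0) // rsym; exact: hx.
Qed.

Lemma fe_in x : Bh x -> fe x = omega h - omega (rho x theta).
Proof. by move=> /omB hx; rewrite /fe; apply: max_l; rewrite subr_ge0. Qed.

Lemma fe_meas : measurable_fun setT fe.
Proof.
apply: measurable_maxr; last exact: measurable_cst.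
apply: measurable_funB; first exact: measurable_cst.
exact: omr_meas.
Qed.

Lemma fe_patch : ((fun x => (fe x)%:E) \_ Bh) = (fun x => (fe x)%:E).
Proof.
apply/funext => x; rewrite /patch; case: ifPn => // /negP; rewrite in_setE => xB.
by rewrite fe_out.
Qed.

Lemma intfeB : mu.-integrable Bh (EFin \o fe).
Proof.
apply: (@bnd_integrable _ _ _ _ _ _ (omega h) mBh mu_fin).
- exact: measurable_funS fe_meas.
- by move=> u _; rewrite ger0_norm ?fe_ge0 ?fe_le.
Qed.

Lemma IfeX : (\int[mu]_x (fe x)%:E = \int[mu]_(x in Bh) (fe x)%:E)%E.
Proof. by rewrite [in RHS]integral_mkcond fe_patch. Qed.

Lemma intfe : mu.-integrable setT (EFin \o fe).
Proof.
apply/integrableP; split; first exact/measurable_EFinP/fe_meas.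
rewrite (eq_integral (fun x => (fe x)%:E)); last by move=> x _ /=; rewrite ger0_norm ?fe_ge0.
rewrite IfeX; apply: integrable_lty; [exact: mBh | exact: intfeB].
Qed.


Lemma transl_theta : transl add theta Bh = Bh.
Proof.
apply/seteqP; split => u /=; first by case=> v Bv <-; rewrite add0.
by move=> Bu; exists u => //; rewrite add0.
Qed.

Let Ie := fine (\int[mu]_(x in Bh) (fe x)%:E)%E.
Let IeE : (\int[mu]_(x in Bh) (fe x)%:E)%E = Ie%:E.
Proof. by rewrite /Ie fineK // integrable_fin_num //; [exact: mBh|exact: intfeB]. Qed.

Lemma chE : chnorm rho add theta nue h = Ie%:E.
Proof.
have ge0 Q : (0 <= nue Q)%E.
  by apply: integral_ge0 => u _; rewrite lee_fin fe_ge0.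
apply/le_anti/andP; split.
  apply/ereal_supP => _ [x _ <-]; rewrite gee0_abs // /nue.
  have [mT _] := Htr _ x mBh.
  rewrite -IeE -IfeX; apply: ge0_subset_integral => //.
  - exact/measurable_EFinP/fe_meas.
  - by move=> u _; rewrite lee_fin fe_ge0.
apply: ereal_sup_ubound; exists theta => //.
by rewrite transl_theta gee0_abs // /nue IeE.
Qed.

Lemma supE : supnorm fe = (omega h)%:E.
Proof.
apply/le_anti/andP; split.
  by apply/ereal_supP => _ [x _ <-]; rewrite lee_fin ger0_norm ?fe_ge0 ?fe_le.
apply: ereal_sup_ubound; exists theta => //.
by rewrite /fe rxx om0 subr0 max_l // ger0_norm.
Qed.

Lemma maxlip (a b : R) : `|Num.max a 0 - Num.max b 0| <= `|a - b|.
Proof.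
have h1 : a - b <= `|a - b| := ler_norm _.
have h2 : b - a <= `|a - b| by rewrite distrC ler_norm.
rewrite ler_norml.
case: (leP a 0) => ha; case: (leP b 0) => hb;
  rewrite ?(max_r ha) ?(max_r hb) ?(max_l (ltW ha)) ?(max_l (ltW hb)); lra.
Qed.

Lemma omlip (a b : R) : 0 <= a -> 0 <= b -> `|omega a - omega b| <= omega `|a - b|.
Proof.
wlog ab : a b / a <= b.
  move=> H a0 b0; case: (leP a b) => hab; first exact: H.
  by rewrite distrC (distrC a); apply: H => //; exact: ltW.
move=> a0 b0.
have oab : omega a <= omega b by apply: om_mon.
rewrite distrC ger0_norm ?subr_ge0 // distrC ger0_norm ?subr_ge0 //.
rewrite lerBlDl.
have := om_sub a (b - a) a0; rewrite subr_ge0 addrC subrK; apply; exact: ab.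
Qed.

Lemma felip x y : `|fe x - fe y| <= omega (rho x y).
Proof.
apply: le_trans (maxlip _ _) _.
have E p q r : (p - q) - (p - r) = r - q :> R by ring.
rewrite E distrC.
apply: le_trans (omlip _ _ (rge0 _ _) (rge0 _ _)) _.
apply: om_mon => //.
rewrite ler_norml; apply/andP; split.
  rewrite lerNl opprB lerBlDl; apply: le_trans (rtri y x theta) _.
  by rewrite (rsym y x) addrC.
by rewrite lerBlDr; apply: (rtri x y theta).
Qed.

Lemma HE1 : Hnorm rho omega fe = 1%:E.
Proof.
apply/le_anti/andP; split.
  apply/ereal_supP => _ [[x y] /= xy <-]; rewrite lee_fin.
  have rpos : 0 < rho x y.
    by rewrite lt_neqAle rge0 andbT eq_sym; apply/eqP => /req.
  have opos := om_pos _ rpos.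
  by rewrite ler_pdivrMr // mul1r felip.
have [y By yt] := exists_y.
apply: ereal_sup_ubound; exists (theta, y) => /=; first by move=> ty; apply: yt.
have rpos : 0 < rho theta y.
  by rewrite lt_neqAle rge0 andbT eq_sym; apply/eqP => /req ty; apply: yt.
have opos := om_pos _ rpos.
rewrite (fe_in theta thetaB) (fe_in y By) rxx om0 subr0.
have -> : omega h - (omega h - omega (rho y theta)) = omega (rho theta y).
  by rewrite (rsym y theta); ring.
by rewrite ger0_norm ?ltW // divff // gt_eqF.
Qed.

Lemma sharp_res :
  mu.-integrable [set: X] (EFin \o fe) /\
   (chnorm rho add theta nue h < +oo)%E /\
   (Hnorm rho omega fe < +oo)%E /\
   (supnorm fe = supnorm_diff mu rho add theta fe nue h
                 + chnorm rho add theta nue h / mu (B rho theta h))%E /\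
   (supnorm_diff mu rho add theta fe nue h
      + chnorm rho add theta nue h / mu (B rho theta h)
    = Hnorm rho omega fe / mu (B rho theta h)
        * \int[mu]_(u in B rho theta h) (omega (rho u theta))%:E
      + chnorm rho add theta nue h / mu (B rho theta h))%E.
Proof.
have chlt : (chnorm rho add theta nue h < +oo)%E by rewrite chE ltry.
have Hlt : (Hnorm rho omega fe < +oo)%E by rewrite HE1 ltry.
have [P1 P2] := @part1_res nue fe intfe (fun Q _ => erefl) chlt Hlt.
have Mpos : 0 < fine (mu Bh) := M_gt0.
set M := fine (mu Bh) in Mpos.
have M0 : M != 0 by rewrite gt_eqF.
set Jv := fine (\int[mu]_(u in Bh) (omega (rho u theta))%:E)%E.
have JvE : (\int[mu]_(u in Bh) (omega (rho u theta))%:E)%E = Jv%:E.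
  by rewrite /Jv fineK // integrable_fin_num //; [exact: mBh|exact: Jint].
have icst : mu.-integrable Bh (EFin \o cst (omega h)).
  apply: (@bnd_integrable _ _ _ _ _ _ `|omega h| mBh mu_fin).
  - by apply: measurable_cst.
  - by move=> u _.
have IeJ : Ie = omega h * M - Jv.
  apply/EFin_inj; rewrite -IeE.
  rewrite (eq_integral (((fun x : X => (omega h)%:E) \- (fun x => (omega (rho x theta))%:E))%E)); last first.
    by move=> x; rewrite in_setE => xB; rewrite fe_in.
  rewrite integralB; [|exact: mBh|exact: icst|exact: Jint].
  rewrite (_ : (fun u : X => (omega h)%:E) = cst (omega h)%:E) // integral_cst; last exact: mBh.
  by rewrite JvE muBE -EFinM -EFinB.
have RE : (Hnorm rho omega fe / mu (B rho theta h)
        * \int[mu]_(u in B rho theta h) (omega (rho u theta))%:E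
      + chnorm rho add theta nue h / mu (B rho theta h))%E = (omega h)%:E.
  rewrite HE1 chE JvE muBE !ediv_fin // -EFinM -EFinD IeJ; congr (_%:E).
  by rewrite -/M; field.
rewrite RE supE in P2 *; rewrite supE in P1.
split; first exact: intfe.
split; first exact: chlt.
split; first exact: Hlt.
have E : (omega h)%:E = (supnorm_diff mu rho add theta fe nue h
      + chnorm rho add theta nue h / mu (B rho theta h))%E.
  by apply/le_anti; rewrite P1 P2.
by split.
Qed.
End sharp. End main.


Theorem theorem4 (R : realType) (d : measure_display) (X : measurableType d)
  (mu : {measure set X -> \bar R}) (rho : X -> X -> R) (add : X -> X -> X)
  (theta : X) (omega : R -> R) (h : R) :
  standing_setting mu rho add theta ->
  modulus_of_continuity omega ->
  0 < h ->
  (* main inequality *)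
  (forall (nu : {charge set X -> \bar R}) (f : X -> R),
     mu.-integrable [set: X] (EFin \o f) ->
     (forall Q, measurable Q -> nu Q = (\int[mu]_(x in Q) (f x)%:E)%E) ->
     (chnorm rho add theta nu h < +oo)%E ->
     (Hnorm rho omega f < +oo)%E ->
     (supnorm f <= supnorm_diff mu rho add theta f nu h
                   + chnorm rho add theta nu h / mu (B rho theta h))%E /\
     (supnorm_diff mu rho add theta f nu h
        + chnorm rho add theta nu h / mu (B rho theta h)
      <= Hnorm rho omega f / mu (B rho theta h)
           * \int[mu]_(u in B rho theta h) (omega (rho u theta))%:E
         + chnorm rho add theta nu h / mu (B rho theta h))%E) /\
  (* sharpness: equality for nu_{e,h} with density (omega h - omega (rho x theta))_+ *)
  (let fe := fun x => Num.max (omega h - omega (rho x theta)) 0 in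
   let nue := fun Q => (\int[mu]_(x in Q) (fe x)%:E)%E in
   mu.-integrable [set: X] (EFin \o fe) /\
   (chnorm rho add theta nue h < +oo)%E /\
   (Hnorm rho omega fe < +oo)%E /\
   (supnorm fe = supnorm_diff mu rho add theta fe nue h
                 + chnorm rho add theta nue h / mu (B rho theta h))%E /\
   (supnorm_diff mu rho add theta fe nue h
      + chnorm rho add theta nue h / mu (B rho theta h)
    = Hnorm rho omega fe / mu (B rho theta h)
        * \int[mu]_(u in B rho theta h) (omega (rho u theta))%:E
      + chnorm rho add theta nue h / mu (B rho theta h))%E).
Proof.
move=> HS Hom h0; split.
  move=> nu f intf hnu hc hH.
  exact: (@part1_res _ _ _ _ _ _ _ _ _ HS Hom h0 nu f intf hnu hc hH).
exact: (@sharp_res _ _ _ _ _ _ _ _ _ HS Hom h0).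
Qed.
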